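(* Let $\kappa$ be a regular infinite cardinal and $\mu$ a singular cardinal with $\mathrm{cf}(\mu)=\kappa$. Then $\mathfrak b({}^{\mu}\kappa,\le_\kappa)=\mathfrak b({}^{\mu}\kappa,\le_{\mathrm{all}})=\kappa$ and $\mathfrak b({}^{\mu}\kappa,\le_\mu)=\mathfrak b({}^{\mu}\kappa,\le_{\mathrm{bd}})=\kappa^+$.
   Context: For $f,g\in{}^{\mu}\kappa$ (functions $\mu\to\kappa$): $f\le_{\mathrm{bd}}g$ if $\{\alpha<\mu: g(\alpha)<f(\alpha)\}$ is bounded in $\mu$; for a cardinal $\nu$, $f\le_\nu g$ if $|\{\alpha<\mu: g(\alpha)<f(\alpha)\}|<\nu$; $f\le_{\mathrm{all}}g$ if $f(\alpha)\le g(\alpha)$ for all $\alpha<\mu$. For such a relation $\le_\bullet$, $\mathfrak b({}^{\mu}\kappa,\le_\bullet)$ is the least size of a set $B\subseteq{}^{\mu}\kappa$ for which there is no $g\in{}^{\mu}\kappa$ with $f\le_\bullet g$ for all $f\in B$. *)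

(* Defs.v *)
Set Implicit Arguments.
Unset Strict Implicit.

Definition le_card (A B : Type) : Prop :=
  exists f : A -> B, forall x y, f x = f y -> x = y.
Definition lt_card (A B : Type) : Prop := le_card A B /\ ~ le_card B A.
Definition eq_card (A B : Type) : Prop :=
  exists (f : A -> B) (g : B -> A),
    (forall x, g (f x) = x) /\ (forall y, f (g y) = y).

Record well_order (T : Type) (lt : T -> T -> Prop) : Prop := {
  wo_irrefl : forall x, ~ lt x x;
  wo_trans : forall x y z, lt x y -> lt y z -> lt x z;
  wo_total : forall x y, lt x y \/ x = y \/ lt y x;
  wo_wf : well_founded lt }.

Definition leq_of (T : Type) (lt : T -> T -> Prop) (x y : T) : Prop :=
  lt x y \/ x = y.

(* A cardinal = an initial ordinal: a well-order each of whose proper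
   initial segments has strictly smaller cardinality. *)
Definition is_cardinal (T : Type) (lt : T -> T -> Prop) : Prop :=
  well_order lt /\ forall x : T, lt_card {y : T | lt y x} T.

Definition infinite (T : Type) : Prop := le_card nat T.

Definition cofinal (T : Type) (lt : T -> T -> Prop) (X : T -> Prop) : Prop :=
  forall x : T, exists y, X y /\ leq_of lt x y.

(* cf(T, lt) = |K| : least cardinality of a cofinal subset is |K| *)
Definition cf_is (T : Type) (lt : T -> T -> Prop) (K : Type) : Prop :=
  (exists X, cofinal lt X /\ eq_card {y : T | X y} K) /\
  (forall X, cofinal lt X -> le_card K {y : T | X y}).

Definition regular (T : Type) (lt : T -> T -> Prop) : Prop := cf_is lt T.

(* the successor cardinal: L has cardinality kappa^+ where kappa = |K| *)
Definition is_succ_card (K L : Type) : Prop :=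
  lt_card K L /\ forall X : Type, lt_card K X -> le_card L X.

Section Rels.
Variables (M K : Type) (ltM : M -> M -> Prop) (ltK : K -> K -> Prop).

Definition le_bd (f g : M -> K) : Prop :=
  exists b : M, forall a : M, ltK (g a) (f a) -> leq_of ltM a b.

(* f <=_nu g : |{a | g a < f a}| < nu, with nu = |N| *)
Definition le_nu (N : Type) (f g : M -> K) : Prop :=
  lt_card {a : M | ltK (g a) (f a)} N.

Definition le_all (f g : M -> K) : Prop :=
  forall a : M, leq_of ltK (f a) (g a).

Definition bounded_family (R : (M -> K) -> (M -> K) -> Prop)
  (B : (M -> K) -> Prop) : Prop :=
  exists g : M -> K, forall f, B f -> R f g.

(* b(^mu kappa, R) = |N| : the least size of an unbounded family is |N| *)
Definition b_is (R : (M -> K) -> (M -> K) -> Prop) (N : Type) : Prop :=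
  (exists B, ~ bounded_family R B /\ eq_card {f : M -> K | B f} N) /\
  (forall B, lt_card {f : M -> K | B f} N -> bounded_family R B).
End Rels.
Arguments le_bd {M K} ltM ltK f g.
Arguments le_nu {M K} ltK N f g.
Arguments le_all {M K} ltK f g.
Arguments bounded_family {M K} R B.
Arguments b_is M K R N : clear implicits.

(* Main.v *)
Require Import Defs.
From Stdlib Require Import Classical ClassicalEpsilon FunctionalExtensionality ProofIrrelevance Arith Lia PeanoNat Cantor Wellfounded.

Lemma sig_eq T (P:T->Prop) (a b : {x|P x}) : proj1_sig a = proj1_sig b -> a = b.
Proof. destruct a, b; simpl; intros ->; f_equal; apply proof_irrelevance. Qed.

Lemma le_refl A : le_card A A.
Proof. exists (fun x => x); auto. Qed.

Lemma le_trans A B C : le_card A B -> le_card B C -> le_card A C.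
Proof. intros [f Hf] [g Hg]; exists (fun x => g (f x)); auto. Qed.

Arguments le_trans {A B C}.

Lemma le_sub T (P : T -> Prop) : le_card {x | P x} T.
Proof. exists (@proj1_sig _ _); intros; now apply sig_eq. Qed.

Lemma le_subset T (P Q : T -> Prop) : (forall x, P x -> Q x) -> le_card {x|P x} {x|Q x}.
Proof.
  intros H. exists (fun x => exist Q (proj1_sig x) (H _ (proj2_sig x))).
  intros x y E. apply sig_eq. exact (f_equal (@proj1_sig _ _) E).
Qed.

Lemma le_lt_trans A B C : le_card A B -> lt_card B C -> lt_card A C.
Proof. intros H [H1 H2]; split. eapply le_trans; eauto. intro H3; apply H2; eapply le_trans; eauto. Qed.

Lemma lt_le_trans A B C : lt_card A B -> le_card B C -> lt_card A C.
Proof. intros [H1 H2] H; split. eapply le_trans; eauto. intro H3; apply H2; eapply le_trans; eauto. Qed.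

Arguments le_lt_trans {A B C}.
Arguments lt_le_trans {A B C}.

Lemma eq_le A B : eq_card A B -> le_card A B.
Proof. intros (f & g & H1 & H2). exists f. intros x y E. rewrite <- (H1 x), <- (H1 y), E; auto. Qed.

Lemma eq_le' A B : eq_card A B -> le_card B A.
Proof. intros (f & g & H1 & H2). exists g. intros x y E. rewrite <- (H2 x), <- (H2 y), E; auto. Qed.

Lemma le_prod A B C D: le_card A C -> le_card B D -> le_card (A*B) (C*D).
Proof.
  intros [f Hf] [g Hg]. exists (fun p => (f (fst p), g (snd p))).
  intros [a b] [c d] E; simpl in *. injection E; intros; f_equal; auto.
Qed.

Lemma nat2_le : le_card (nat*nat) nat.
Proof. exists to_nat. intros x y E. rewrite <- (cancel_of_to x), <- (cancel_of_to y), E; auto. Qed.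

Definition choose {A} {P : A -> Prop} (H : exists x, P x) : A :=
  proj1_sig (constructive_indefinite_description P H).
Lemma choose_spec {A} {P : A -> Prop} (H : exists x, P x) : P (choose H).
Proof. unfold choose; destruct constructive_indefinite_description; auto. Qed.

Lemma choice_fun A B (R : A -> B -> Prop) : (forall a, exists b, R a b) -> exists f : A -> B, forall a, R a (f a).
Proof. intros H. exists (fun a => choose (H a)). intros a; apply choose_spec. Qed.

Arguments choice_fun {A B R}.

Lemma option_le T : infinite T -> le_card (option T) T.
Proof.
  intros [i Hi].
  exists (fun o => match o with None => i 0 | Some t =>
     match excluded_middle_informative (exists n, i n = t) with
     | left e => i (S (choose e)) | right _ => t end end).
  intros [x|] [y|]; auto.
  - destruct excluded_middle_informative as [e|n]; destruct excluded_middle_informative as [e'|n'].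
    + intros E. apply Hi in E. injection E; intro E'.
      pose proof (choose_spec e); pose proof (choose_spec e'). rewrite E' in *. congruence.
    + intros E. exfalso; apply n'; eauto.
    + intros E. exfalso; apply n; eauto.
    + congruence.
  - destruct excluded_middle_informative as [e|n].
    + intros E; apply Hi in E; discriminate.
    + intros E; exfalso; apply n; eauto.
  - destruct excluded_middle_informative as [e|n].
    + intros E; apply Hi in E; discriminate.
    + intros E; exfalso; apply n; eauto.
Qed.

Section WO.
Variables (T : Type) (lt : T -> T -> Prop) (W : well_order lt).

Lemma lt_irr x : ~ lt x x.  Proof. apply (wo_irrefl W). Qed.
Lemma lt_tr x y z : lt x y -> lt y z -> lt x z.  Proof. apply (wo_trans W). Qed.
Lemma lt_asym x y : lt x y -> lt y x -> False.
Proof. intros; apply (lt_irr x); eapply lt_tr; eauto. Qed.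
Lemma lt_tot x y : lt x y \/ x = y \/ lt y x. Proof. apply (wo_total W). Qed.
Lemma not_lt_leq x y : ~ lt y x -> leq_of lt x y.
Proof. intros H; destruct (lt_tot x y) as [h|[h|h]]; red; auto; contradiction. Qed.
Lemma leq_not_lt x y : leq_of lt x y -> ~ lt y x.
Proof. intros [h|h] h'; subst. eapply lt_asym; eauto. eapply lt_irr; eauto. Qed.
Lemma leq_lt_tr x y z : leq_of lt x y -> lt y z -> lt x z.
Proof. intros [h|h] h'; subst; auto. eapply lt_tr; eauto. Qed.
Lemma lt_leq_tr x y z : lt x y -> leq_of lt y z -> lt x z.
Proof. intros h [h'|h']; subst; auto. eapply lt_tr; eauto. Qed.
Lemma leq_tr x y z : leq_of lt x y -> leq_of lt y z -> leq_of lt x z.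
Proof. intros [h|h] h'; subst; auto. left; eapply lt_leq_tr; eauto. Qed.

Lemma wo_min (P : T -> Prop) : (exists x, P x) -> exists x, P x /\ forall y, P y -> leq_of lt x y.
Proof.
  intros [x0 H0]. apply NNPP; intro Hn.
  assert (forall x, ~ P x) as HP.
  { intro x. induction x as [x IH] using (well_founded_ind (wo_wf W)).
    intro Px. apply Hn. exists x; split; auto. intros y Py. apply not_lt_leq. intro h. apply (IH y h Py). }
  eapply HP; eauto.
Qed.

Lemma compare (B : Type) : le_card T B \/ exists a0, le_card B {a | lt a a0}.
Proof.
  destruct (classic (inhabited T)) as [[t0]|nT].
  2:{ left. exists (fun t => False_rect _ (nT (inhabits t))). intros x; exfalso; apply nT; constructor; auto. }
  destruct (classic (inhabited B)) as [[b0]|nB].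
  2:{ right. exists t0. exists (fun b => False_rect _ (nB (inhabits b))). intros x; exfalso; apply nB; constructor; auto. }
  set (Fb := fun a (rec : forall a', lt a' a -> B) =>
     match excluded_middle_informative (exists b, forall a' (h: lt a' a), rec a' h <> b) with
     | left e => choose e | right _ => b0 end).
  set (F := Fix (wo_wf W) (fun _ => B) Fb).
  assert (FE : forall a, F a = Fb a (fun a' _ => F a')).
  { intro a. unfold F. apply (Fix_eq (wo_wf W) (fun _ => B) Fb). intros x f g Hfg. unfold Fb.
    assert (f = g) as ->. { apply functional_extensionality_dep; intro y; apply functional_extensionality; auto. }
    auto. }
  assert (Key : forall a, (exists b, forall a', lt a' a -> F a' <> b) -> forall a', lt a' a -> F a' <> F a).
  { intros a [b Hb] a' h. rewrite (FE a). unfold Fb.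
    destruct excluded_middle_informative as [e|n].
    - exact (choose_spec e a' h).
    - exfalso; apply n; exists b; intros; auto. }
  destruct (classic (forall a, exists b, forall a', lt a' a -> F a' <> b)) as [Hall|Hn].
  - left. exists F. intros x y E. destruct (lt_tot x y) as [h|[h|h]]; auto.
    + exfalso; apply (Key y (Hall y) x h E).
    + exfalso; apply (Key x (Hall x) y h); auto.
  - right. apply not_all_ex_not in Hn. destruct Hn as [a0 Ha0]. exists a0.
    assert (forall b, exists a', lt a' a0 /\ F a' = b) as Hb.
    { intro b. apply NNPP; intro H. apply Ha0. exists b. intros a' h E. apply H; eauto. }
    exists (fun b => exist _ (choose (Hb b)) (proj1 (choose_spec (Hb b)))).
    intros x y E. injection E; intro E'.
    rewrite <- (proj2 (choose_spec (Hb x))), <- (proj2 (choose_spec (Hb y))). congruence.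
Qed.

Lemma small_bounded (K : Type) (P : T -> Prop) :
  (forall X, cofinal lt X -> le_card K {y | X y}) -> ~ le_card K {y | P y} ->
  exists b, forall y, P y -> lt y b.
Proof.
  intros Hc Hn. assert (~ cofinal lt P) as Hnc by (intro h; apply Hn; auto).
  unfold cofinal in Hnc. apply not_all_ex_not in Hnc. destruct Hnc as [b Hb].
  exists b. intros y Py. destruct (lt_tot y b) as [h|[h|h]]; auto; exfalso; apply Hb; exists y; split; auto; red; auto.
Qed.

End WO.
Arguments lt_irr {T lt} W x.
Arguments lt_tr {T lt} W {x y z}.
Arguments lt_asym {T lt} W {x y}.
Arguments lt_tot {T lt} W x y.
Arguments not_lt_leq {T lt} W {x y}.
Arguments leq_not_lt {T lt} W {x y}.
Arguments leq_lt_tr {T lt} W {x y z}.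
Arguments lt_leq_tr {T lt} W {x y z}.
Arguments leq_tr {T lt} W {x y z}.
Arguments wo_min {T lt} W P.
Arguments compare {T lt} W B.
Arguments small_bounded {T lt} W K P.

Definition lex {A B} (ltA : A->A->Prop) (ltB : B->B->Prop) (p q : A*B) :=
  ltA (fst p) (fst q) \/ (fst p = fst q /\ ltB (snd p) (snd q)).

Lemma lex_wo A B (ltA : A->A->Prop) (ltB : B->B->Prop) :
  well_order ltA -> well_order ltB -> well_order (lex ltA ltB).
Proof.
  intros WA WB; split.
  - intros [a b] [h|[_ h]]; simpl in *; [exact (lt_irr WA _ h) | exact (lt_irr WB _ h)].
  - intros [a b] [c d] [e f] [h|[h1 h2]] [h'|[h1' h2']]; simpl in *; subst; red; simpl.
    + left; eapply lt_tr; eauto.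
    + left; auto.
    + left; auto.
    + right; split; auto; eapply lt_tr; eauto.
  - intros [a b] [c d]; unfold lex; simpl.
    destruct (lt_tot WA a c) as [h|[h|h]]; auto. subst.
    destruct (lt_tot WB b d) as [h|[h|h]]; subst; auto.
  - intros [a b]. revert b. induction a as [a IHa] using (well_founded_ind (wo_wf WA)).
    intro b. induction b as [b IHb] using (well_founded_ind (wo_wf WB)).
    constructor. intros [a' b'] [h|[e h]]; simpl in *.
    + apply IHa; auto.
    + subst; apply IHb; auto.
Qed.

Lemma pull_wo A B (f : A -> B) (ltB: B->B->Prop) :
  (forall x y, f x = f y -> x = y) -> well_order ltB -> well_order (fun x y => ltB (f x) (f y)).
Proof.
  intros Hf WB; split.
  - intros x; apply (lt_irr WB).
  - intros x y z; apply (lt_tr WB).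
  - intros x y. destruct (lt_tot WB (f x) (f y)) as [h|[h|h]]; auto.
  - assert (forall y x, f x = y -> Acc (fun x y => ltB (f x) (f y)) x) as H.
    { intro y. induction y as [y IH] using (well_founded_ind (wo_wf WB)).
      intros x <-. constructor. intros z hz. eapply IH; eauto. }
    intro x; eapply H; eauto.
Qed.

Section Card.
Variables (T : Type) (lt : T -> T -> Prop) (C : is_cardinal lt).
Let W : well_order lt := proj1 C.

Lemma seg_small x : ~ le_card T {y | lt y x}.
Proof. exact (proj2 (proj2 C x)). Qed.

Lemma no_max : infinite T -> forall m, exists y, lt m y.
Proof.
  intros Hi m. apply NNPP; intro Hn.
  assert (Hm : forall y, y <> m -> lt y m).
  { intros y hy. destruct (lt_tot W y m) as [h|[h|h]]; auto. contradiction. exfalso; apply Hn; eauto. }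
  destruct (@option_le T Hi) as [s Hs].
  set (sw := fun y => match excluded_middle_informative (y = s None) with
                      | left _ => m | right _ => match excluded_middle_informative (y = m) with
                         | left _ => s None | right _ => y end end).
  assert (swi : forall x y, sw x = sw y -> x = y).
  { intros x y; unfold sw. repeat destruct excluded_middle_informative; intros; subst; congruence. }
  assert (Hne : forall t, sw (s (Some t)) <> m).
  { intros t; unfold sw. repeat destruct excluded_middle_informative; try congruence.
    apply Hs in e; discriminate. }
  apply (seg_small m). exists (fun t => exist _ (sw (s (Some t))) (Hm _ (Hne t))).
  intros x y E. injection E; intro E'. apply swi, Hs in E'. congruence.
Qed.

Lemma leq_seg x y : lt x y -> le_card {z | leq_of lt z x} {z | lt z y}.
Proof. intros h; apply le_subset; intros z hz; eapply leq_lt_tr; eauto. Qed.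

End Card.
Arguments no_max {T lt} C _ m.
Arguments seg_small {T lt} C x.
Arguments leq_seg {T lt} C {x y}.

Section Hess.
Variables (T : Type) (lt : T -> T -> Prop) (C : is_cardinal lt).
Let W : well_order lt := proj1 C.

Definition mx (p : T*T) : T :=
  if excluded_middle_informative (lt (fst p) (snd p)) then snd p else fst p.
Definition gk (p : T*T) : T*(T*T) := (mx p, p).
Definition G (p q : T*T) : Prop := lex lt (lex lt lt) (gk p) (gk q).

Lemma G_wo : well_order G.
Proof.
  apply (@pull_wo _ _ gk). intros x y E. unfold gk in E. injection E; auto.
  apply lex_wo; auto. apply lex_wo; auto.
Qed.

Lemma mx_fst p : leq_of lt (fst p) (mx p).
Proof. unfold mx; destruct excluded_middle_informative; red; auto. Qed.
Lemma mx_snd p : leq_of lt (snd p) (mx p).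
Proof. unfold mx; destruct excluded_middle_informative; red; auto. apply not_lt_leq; auto. Qed.
Lemma G_mx p q : G p q -> leq_of lt (mx p) (mx q).
Proof. intros [h|[h _]]; simpl in *; red; auto. Qed.

Lemma hess_step : infinite T ->
  (forall c, infinite {y | lt y c} -> le_card ({y|lt y c} * {y|lt y c}) {y | lt y c}) ->
  le_card (T*T) T.
Proof.
  intros Hi IH.
  destruct (compare W nat) as [Hn|[a0 Ha0]].
  - eapply le_trans. apply le_prod; exact Hn. eapply le_trans. apply nat2_le. exact Hi.
  - destruct (compare G_wo T) as [H|[q Hq]]; auto. exfalso.
    destruct (no_max C Hi (mx q)) as [m' hm'].
    set (n' := if excluded_middle_informative (lt a0 m') then m' else a0).
    assert (h1 : leq_of lt a0 n').
    { unfold n'; destruct excluded_middle_informative; red; auto. }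
    assert (h2 : lt (mx q) n').
    { unfold n'; destruct excluded_middle_informative; auto.
      apply (lt_leq_tr W hm'). apply not_lt_leq; auto. }
    assert (Sinf : infinite {y | lt y n'}).
    { eapply le_trans. exact Ha0. apply le_subset. intros y hy. eapply lt_leq_tr; eauto. }
    assert (F1 : forall p, G p q -> lt (fst p) n').
    { intros p hp. eapply leq_lt_tr; eauto. eapply leq_tr; eauto. apply mx_fst. apply G_mx; auto. }
    assert (F2 : forall p, G p q -> lt (snd p) n').
    { intros p hp. eapply leq_lt_tr; eauto. eapply leq_tr; eauto. apply mx_snd. apply G_mx; auto. }
    assert (Hs : le_card {p | G p q} ({y|lt y n'} * {y|lt y n'})).
    { exists (fun p => (exist _ (fst (proj1_sig p)) (F1 _ (proj2_sig p)),
                       exist _ (snd (proj1_sig p)) (F2 _ (proj2_sig p)))).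
      intros [[a b] ha] [[c d] hc] E. injection E; intros; subst. apply sig_eq; simpl; auto. }
    apply (seg_small C n'). eapply le_trans. exact Hq. eapply le_trans. exact Hs. apply IH; auto.
Qed.

End Hess.

Lemma sq_transfer A B : eq_card A B -> le_card (B*B) B -> le_card (A*A) A.
Proof.
  intros E H. eapply le_trans. apply le_prod; apply eq_le; exact E.
  eapply le_trans. exact H. apply eq_le'; auto.
Qed.

Section HessAll.
Variables (T : Type) (lt : T -> T -> Prop) (C : is_cardinal lt).
Let W : well_order lt := proj1 C.

Lemma hess_all : forall c, infinite {y | lt y c} -> le_card ({y|lt y c} * {y|lt y c}) {y | lt y c}.
Proof.
  intro c. induction c as [c IH] using (well_founded_ind (wo_wf W)). intro Hinf.
  destruct (classic (exists d, lt d c /\ le_card {y | lt y c} {y | lt y d})) as [[d [hd Hd]]|Hn].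
  - eapply le_trans. apply le_prod; exact Hd. eapply le_trans. apply IH; auto.
    eapply le_trans; eauto. apply le_subset; intros y hy; eapply lt_tr; eauto.
  - set (T' := {y | lt y c}).
    set (lt' := fun a b : T' => lt (proj1_sig a) (proj1_sig b)).
    assert (W' : well_order lt').
    { apply (@pull_wo _ _ (@proj1_sig _ _)); auto. intros; apply sig_eq; auto. }
    assert (SEG : forall x : T', eq_card {y : T' | lt' y x} {z | lt z (proj1_sig x)}).
    { intros x. exists (fun y : {y : T' | lt' y x} => exist (fun z => lt z (proj1_sig x)) (proj1_sig (proj1_sig y)) (proj2_sig y)).
      exists (fun z => exist (fun y : T' => lt' y x)
                   (exist _ (proj1_sig z) (lt_tr W (proj2_sig z) (proj2_sig x))) (proj2_sig z)).
      split; intros; apply sig_eq; simpl; auto. apply sig_eq; auto. }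
    assert (C' : is_cardinal lt').
    { split; auto. intros x. split. apply le_sub.
      intro H. apply Hn. exists (proj1_sig x); split. apply (proj2_sig x).
      eapply le_trans. exact H. apply eq_le. apply SEG. }
    apply (@hess_step T' lt' C'); auto.
    intros x Hx. apply (@sq_transfer _ _ (SEG x)). apply IH. apply (proj2_sig x).
    eapply le_trans. exact Hx. apply eq_le. apply SEG.
Qed.

Lemma hess : infinite T -> le_card (T*T) T.
Proof. intro Hi. apply (@hess_step T lt C); auto. apply hess_all. Qed.
End HessAll.
Arguments hess_all {T lt} C c.
Arguments hess {T lt} C.

Lemma le_sub_fun A B (P: A -> Prop) (b0 : B) : le_card {a|P a} B ->
  exists i : A -> B, forall x y, P x -> P y -> i x = i y -> x = y.
Proof.
  intros [h Hh].
  exists (fun a => match excluded_middle_informative (P a) with left p => h (exist _ a p) | right _ => b0 end).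
  intros x y px py. destruct excluded_middle_informative; [|contradiction].
  destruct excluded_middle_informative; [|contradiction].
  intro E; apply Hh in E. exact (f_equal (@proj1_sig _ _) E).
Qed.

Arguments le_sub_fun {A B P}.

Section Main.
Variables (M K : Type) (ltM : M -> M -> Prop) (ltK : K -> K -> Prop).
Hypotheses (CK : is_cardinal ltK) (IK : infinite K) (RK : regular ltK)
  (CM : is_cardinal ltM) (CF : cf_is ltM K) (KM : lt_card K M).

Let WK : well_order ltK := proj1 CK.
Let WM : well_order ltM := proj1 CM.

Definition k0ex : K := proj1_sig (constructive_indefinite_description _ IK) 0.
Lemma IM : infinite M. Proof. exact (le_trans IK (proj1 KM)). Qed.
Definition m0ex : M := proj1_sig (constructive_indefinite_description _ IM) 0.
Lemma KK : le_card (K*K) K. Proof. exact (hess CK IK). Qed.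
Lemma MMle : le_card (M*M) M. Proof. exact (hess CM IM). Qed.
Lemma notMK : ~ le_card M K. Proof. exact (proj2 KM). Qed.

Lemma sucK : exists s : K -> K, forall k, ltK k (s k).
Proof. apply choice_fun. apply (no_max CK IK). Qed.
Lemma sucM : exists s : M -> M, forall k, ltM k (s k).
Proof. apply choice_fun. apply (no_max CM IM). Qed.

Lemma boundK (P : K -> Prop) : ~ le_card K {y|P y} -> exists b, forall y, P y -> ltK y b.
Proof. apply (small_bounded WK K P). exact (proj2 RK). Qed.
Lemma boundM (P : M -> Prop) : ~ le_card K {y|P y} -> exists b, forall y, P y -> ltM y b.
Proof. apply (small_bounded WM K P). exact (proj2 CF). Qed.

Lemma segK_small (P : K -> Prop) k : le_card {y|P y} {j | ltK j k} -> ~ le_card K {y|P y}.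
Proof. intros H H'. apply (seg_small CK k). eapply le_trans; eauto. Qed.

Lemma leqK_small (P : K -> Prop) k : le_card {y|P y} {j | leq_of ltK j k} -> ~ le_card K {y|P y}.
Proof.
  intros H. destruct (no_max CK IK k) as [k' hk']. apply (segK_small _ k').
  eapply le_trans; eauto. apply le_subset. intros; eapply leq_lt_tr; eauto.
Qed.

Lemma cof_seq : exists psi : K -> M, forall a, exists k, leq_of ltM a (psi k).
Proof.
  destruct (proj1 CF) as [X [HX (phi & psi & H1 & H2)]].
  exists (fun k => proj1_sig (psi k)). intros a. destruct (HX a) as [y [Xy hy]].
  exists (phi (exist _ y Xy)). rewrite H1. simpl. auto.
Qed.

Lemma A_lower (B : (M -> K) -> Prop) : lt_card {f | B f} K ->
  exists g, forall f, B f -> forall a, ltK (f a) (g a).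
Proof.
  intros [HB1 HB2].
  cut (forall a, exists b, forall f, B f -> ltK (f a) b).
  { intro H. destruct (choice_fun H) as [g Hg]. exists g. intros f hf a. apply Hg; auto. }
  intro a.
  destruct (boundK (fun v => exists f, B f /\ f a = v)) as [b Hb].
  2:{ exists b. intros f hf. apply Hb. eauto. } intro H. apply HB2. eapply le_trans. exact H.
  assert (Hc : forall v : {v | exists f, B f /\ f a = v}, exists f, B f /\ f a = proj1_sig v)
    by (intros [v hv]; exact hv).
  exists (fun v => exist _ (choose (Hc v)) (proj1 (choose_spec (Hc v)))).
  intros v w E. injection E; intro E'. apply sig_eq.
  rewrite <- (proj2 (choose_spec (Hc v))), <- (proj2 (choose_spec (Hc w))), E'. auto.
Qed.

Definition constfam (f : M -> K) : Prop := exists k, f = fun _ => k.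

Lemma constfam_eq : eq_card {f | constfam f} K.
Proof.
  set (a0 := m0ex).
  exists (fun f => proj1_sig f a0).
  exists (fun k => exist constfam (fun _ => k) (ex_intro _ k eq_refl)).
  split.
  - intros [f [k ->]]. apply sig_eq; simpl; auto.
  - intros k; simpl; auto.
Qed.

Lemma A_all : b_is M K (le_all ltK) K.
Proof.
  split.
  - exists constfam. split; [|exact constfam_eq].
    intros [g Hg]. destruct (no_max CK IK (g m0ex)) as [k hk].
    assert (H := Hg (fun _ => k) (ex_intro _ k eq_refl) m0ex). simpl in H.
    exact (leq_not_lt WK H hk).
  - intros B HB. destruct (A_lower _ HB) as [g Hg]. exists g. intros f hf a. left; auto.
Qed.

Lemma A_nu : b_is M K (le_nu ltK K) K.
Proof.
  split.
  - exists constfam. split; [|exact constfam_eq].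
    intros [g Hg].
    assert (HS : forall k, le_card {a | ltK (g a) k} K).
    { intro k. exact (proj1 (Hg (fun _ => k) (ex_intro _ k eq_refl))). }
    assert (HI : forall k, exists i : M -> K, forall x y, ltK (g x) k -> ltK (g y) k -> i x = i y -> x = y).
    { intro k. apply (le_sub_fun k0ex). apply HS. }
    apply choice_fun in HI. destruct HI as [I HI].
    destruct sucK as [s hs].
    apply notMK. eapply le_trans; [|exact KK].
    exists (fun a => (g a, I (s (g a)) a)).
    intros x y E. injection E; intros E2 E1. rewrite E1 in E2.
    apply (HI (s (g y))); auto. rewrite E1; auto.
  - intros B HB. destruct (A_lower _ HB) as [g Hg]. exists g. intros f hf.
    split.
    + exists (fun a => False_rect K (leq_not_lt WK (or_intror eq_refl) (lt_tr WK (proj2_sig a) (Hg f hf _)))).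
      intros [x hx]. exfalso. exact (leq_not_lt WK (or_intror eq_refl) (lt_tr WK hx (Hg f hf _))).
    + intros [h _]. destruct (h k0ex) as [x hx].
      exact (leq_not_lt WK (or_intror eq_refl) (lt_tr WK hx (Hg f hf _))).
Qed.

Lemma B_lower (B : (M -> K) -> Prop) : le_card {f | B f} K ->
  exists g, forall f, B f -> exists c, forall a, ltK (g a) (f a) -> leq_of ltM a c.
Proof.
  intros HB.
  destruct (le_sub_fun k0ex HB) as [io Hio].
  destruct cof_seq as [psi Hpsi].
  destruct (choice_fun Hpsi) as [k0 Hk0].
  cut (forall a, exists b, forall f, B f -> ltK (io f) (k0 a) -> ltK (f a) b).
  { intro H. destruct (choice_fun H) as [g Hg]. exists g. intros f hf.
    destruct sucK as [s hs].
    destruct (boundM (fun m => exists j, ltK j (s (io f)) /\ psi j = m)) as [c Hc].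
    { intro H'. apply (seg_small CK (s (io f))). eapply le_trans. exact H'.
      assert (Hx : forall m : {m | exists j, ltK j (s (io f)) /\ psi j = m},
                 exists j, ltK j (s (io f)) /\ psi j = proj1_sig m) by (intros [m hm]; exact hm).
      exists (fun m => exist _ (choose (Hx m)) (proj1 (choose_spec (Hx m)))).
      intros m1 m2 E. injection E; intro E'. apply sig_eq.
      rewrite <- (proj2 (choose_spec (Hx m1))), <- (proj2 (choose_spec (Hx m2))), E'. auto. }
    exists c. intros a ha. apply (not_lt_leq WM). intro hca.
    assert (Hlt : leq_of ltK (k0 a) (io f) -> False).
    { intros hj. assert (h1 : ltM (psi (k0 a)) c).
      { apply Hc. exists (k0 a); split; auto. eapply (leq_lt_tr WK); eauto. }
      apply (lt_asym WM hca). exact (leq_lt_tr WM (Hk0 a) h1). }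
    destruct (lt_tot WK (io f) (k0 a)) as [h|[h|h]].
    - exact (lt_asym WK ha (Hg a f hf h)).
    - apply Hlt. right; auto.
    - apply Hlt. left; auto. }
  intro a. destruct (boundK (fun v => exists f, B f /\ ltK (io f) (k0 a) /\ f a = v)) as [b Hb].
  - apply (segK_small _ (k0 a)).
    assert (Hx : forall v : {v | exists f, B f /\ ltK (io f) (k0 a) /\ f a = v},
               exists f, B f /\ ltK (io f) (k0 a) /\ f a = proj1_sig v) by (intros [v hv]; exact hv).
    exists (fun v => exist _ (io (choose (Hx v))) (proj1 (proj2 (choose_spec (Hx v))))).
    intros v w E. injection E; intro E'. apply sig_eq.
    pose proof (choose_spec (Hx v)) as [h1 [_ h3]]. pose proof (choose_spec (Hx w)) as [h1' [_ h3']].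
    rewrite <- h3, <- h3'. rewrite (Hio _ _ h1 h1' E'); auto.
  - exists b. intros f hf h. apply Hb. eauto.
Qed.

Lemma B_lower_bd (B : (M -> K) -> Prop) : le_card {f|B f} K -> bounded_family (le_bd ltM ltK) B.
Proof.
  intros HB. destruct (B_lower _ HB) as [g Hg]. exists g. intros f hf.
  destruct (Hg f hf) as [c Hc]. exists c; auto.
Qed.

Lemma leqM_small c : lt_card {a | leq_of ltM a c} M.
Proof.
  destruct (no_max CM IM c) as [c' hc']. eapply le_lt_trans.
  apply (le_subset _ (fun a => leq_of ltM a c) (fun a => ltM a c')).
  intros a ha; eapply (leq_lt_tr WM); eauto. exact (proj2 CM c').
Qed.

Lemma B_lower_nu B : le_card {f|B f} K -> bounded_family (@le_nu M K ltK M) B.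
Proof.
  intros HB. destruct (B_lower _ HB) as [g Hg]. exists g. intros f hf.
  destruct (Hg f hf) as [c Hc]. red. eapply le_lt_trans; [|exact (leqM_small c)].
  apply le_subset; auto.
Qed.

Lemma succ_small L B : is_succ_card K L -> lt_card {f : M -> K | B f} L -> le_card {f|B f} K.
Proof.
  intros [HKL HL] [_ HBL]. destruct (compare WK {f|B f}) as [H|[k Hk]].
  - apply NNPP; intro Hn. apply HBL. apply HL. split; auto.
  - eapply le_trans; eauto. apply le_sub.
Qed.

Definition Pm (x : M) : Prop := le_card {y | ltM y x} K.

Lemma P_down x y : Pm x -> ltM y x -> Pm y.
Proof. intros H h. eapply le_trans; [|exact H]. apply le_subset. intros; eapply (lt_tr WM); eauto. Qed.

Lemma leq_neq_lt (z x : M) : leq_of ltM z x -> z <> x -> ltM z x.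
Proof. intros [h|h] n; auto; contradiction. Qed.

Lemma opt_le A B : le_card A B -> le_card (option A) (option B).
Proof.
  intros [f Hf]. exists (fun o => match o with None => None | Some a => Some (f a) end).
  intros [a|] [b|] E; try discriminate; auto. injection E; intro; f_equal; auto.
Qed.

Lemma leq_opt (x : M) : le_card {z | leq_of ltM z x} (option {y | ltM y x}).
Proof.
  exists (fun z : {z | leq_of ltM z x} => match excluded_middle_informative (proj1_sig z = x) with
            | left _ => None
            | right n => Some (exist _ (proj1_sig z) (leq_neq_lt _ _ (proj2_sig z) n)) end).
  intros [a ha] [b hb]; simpl.
  destruct excluded_middle_informative as [e|n]; destruct excluded_middle_informative as [e'|n'];
    intro E; try discriminate.
  - apply sig_eq; simpl; congruence.
  - injection E; intro; apply sig_eq; auto.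
Qed.

Lemma P_leq x : Pm x -> le_card {z | leq_of ltM z x} K.
Proof.
  intros H. eapply le_trans. apply leq_opt. eapply le_trans. apply opt_le; exact H.
  exact (@option_le K IK).
Qed.

Lemma all_P_false : (forall x, Pm x) -> False.
Proof.
  intros HP. destruct cof_seq as [psi Hpsi]. destruct (choice_fun Hpsi) as [k0 Hk0].
  assert (HI : forall k, exists i : M -> K, forall x y, leq_of ltM x (psi k) -> leq_of ltM y (psi k) -> i x = i y -> x = y).
  { intro k. apply (le_sub_fun k0ex). apply P_leq; auto. }
  destruct (choice_fun HI) as [I HI'].
  apply notMK. eapply le_trans; [|exact KK].
  exists (fun a => (k0 a, I (k0 a) a)).
  intros x y E. injection E; intros E2 E1. rewrite E1 in E2.
  apply (HI' (k0 y)); auto. rewrite <- E1; auto.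
Qed.

Lemma P_notle : ~ le_card {x|Pm x} K.
Proof.
  intro H.
  assert (Hex : exists z, ~ Pm z).
  { apply NNPP; intro Hn. apply all_P_false. intro x; apply NNPP; intro; apply Hn; eauto. }
  destruct (wo_min WM (fun z => ~Pm z) Hex) as [z [hz hmin]].
  apply hz. eapply le_trans; [|exact H]. apply le_subset.
  intros y hy. apply NNPP; intro hn. exact (leq_not_lt WM (hmin y hn) hy).
Qed.

Lemma P_bound : exists z, forall x, Pm x -> ltM x z.
Proof.
  assert (Hex : exists z, ~ Pm z).
  { apply NNPP; intro Hn. apply all_P_false. intro x; apply NNPP; intro; apply Hn; eauto. }
  destruct Hex as [z hz]. exists z. intros x px. apply NNPP; intro h.
  destruct (not_lt_leq WM h) as [h'|h']. apply hz; eapply P_down; eauto. subst; auto.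
Qed.

Lemma P_reg (Y : M -> Prop) : (forall y, Y y -> Pm y) -> le_card {y|Y y} K ->
  exists b, Pm b /\ forall y, Y y -> ltM y b.
Proof.
  intros HYP HY. apply NNPP; intro Hn.
  assert (Hc : forall x, exists y, Pm x -> Y y /\ leq_of ltM x y).
  { intro x. destruct (classic (Pm x)) as [px|npx].
    - apply NNPP; intro H. apply Hn. exists x; split; auto. intros y hy.
      apply NNPP; intro h. apply H. exists y. intros _; split; auto. apply (not_lt_leq WM); auto.
    - exists x; intro; contradiction. }
  destruct (choice_fun Hc) as [yx Hyx].
  destruct (le_sub_fun k0ex HY) as [iY HiY].
  assert (HI : forall y, exists i : M -> K, Pm y -> forall a b, leq_of ltM a y -> leq_of ltM b y -> i a = i b -> a = b).
  { intro y. destruct (classic (Pm y)) as [py|npy].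
    - destruct (le_sub_fun k0ex (P_leq _ py)) as [i Hi]. exists i; intros _; auto.
    - exists (fun _ => k0ex); intro; contradiction. }
  destruct (choice_fun HI) as [I HI'].
  apply P_notle. eapply le_trans; [|exact KK].
  exists (fun x => (iY (yx (proj1_sig x)), I (yx (proj1_sig x)) (proj1_sig x))).
  intros [x px] [y py] E; simpl in E. injection E; intros E2 E1.
  destruct (Hyx x px) as [h1 h2]. destruct (Hyx y py) as [h1' h2'].
  assert (Ey : yx x = yx y) by (apply HiY; auto).
  rewrite Ey in E2, h2. apply sig_eq; simpl. apply (HI' (yx y)); auto.
Qed.

Definition fam (p : M*M -> M) (E : M -> M -> K) (km : K) (al : M) (a : M) : K :=
  match excluded_middle_informative (exists q, ltM (snd q) al /\ p q = a) with
  | left h => E al (snd (choose h)) | right _ => km end.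

Lemma fam_at p E km al x be : (forall q q', p q = p q' -> q = q') -> ltM be al ->
  fam p E km al (p (x,be)) = E al be.
Proof.
  intros Hp h. unfold fam. destruct excluded_middle_informative as [e|n].
  - destruct (choose_spec e) as [h1 h2]. apply Hp in h2. rewrite h2; auto.
  - exfalso; apply n; exists (x,be); auto.
Qed.

Lemma fam_km p E km al x be : (forall q q', p q = p q' -> q = q') -> ~ ltM be al ->
  fam p E km al (p (x,be)) = km.
Proof.
  intros Hp h. unfold fam. destruct excluded_middle_informative as [e|n]; auto.
  destruct (choose_spec e) as [h1 h2]. apply Hp in h2. rewrite h2 in h1. contradiction.
Qed.

Section Claims.
Variable E : M -> M -> K.
Hypothesis HE : forall al, Pm al -> forall be be', ltM be al -> ltM be' al -> E al be = E al be' -> be = be'.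

Lemma claim1 (h : M -> K) : exists ax, Pm ax /\
  forall al, Pm al -> leq_of ltM ax al -> exists be, ltM be al /\ ltK (h be) (E al be).
Proof.
  assert (Hj : exists j, forall b, Pm b -> exists be, (Pm be /\ h be = j) /\ leq_of ltM b be).
  { apply NNPP; intro Hn.
    assert (Hb : forall j, exists b, Pm b /\ forall be, Pm be -> h be = j -> ltM be b).
    { intro j. apply NNPP; intro H2. apply Hn. exists j. intros b pb. apply NNPP; intro H3.
      apply H2. exists b; split; auto. intros be pbe hbe. apply NNPP; intro H4. apply H3.
      exists be. split; auto. apply (not_lt_leq WM); auto. }
    destruct (choice_fun Hb) as [bj Hbj].
    destruct (P_reg (fun y => exists j, bj j = y)) as [bs [pbs Hbs]].
    - intros y [j <-]. apply Hbj.
    - assert (Hx : forall y : {y | exists j, bj j = y}, exists j, bj j = proj1_sig y) by (intros [y hy]; exact hy).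
      exists (fun y => choose (Hx y)). intros y y' E'. apply sig_eq.
      rewrite <- (choose_spec (Hx y)), <- (choose_spec (Hx y')), E'; auto.
    - destruct (Hbj (h bs)) as [_ H]. apply (lt_asym WM (H bs pbs eq_refl)). apply Hbs; eauto. }
  destruct Hj as [j Hj].
  set (Phi := fun be => Pm be /\ h be = j).
  assert (Phin : ~ le_card {be | Phi be} K).
  { intro H. destruct (P_reg Phi) as [b [pb Hb]]; auto. intros y [py _]; auto.
    destruct (Hj b pb) as [be [hbe hle]]. exact (leq_not_lt WM hle (Hb be hbe)). }
  destruct (compare WK {be | Phi be}) as [[tau Htau]|[k' Hk']].
  2:{ exfalso; apply Phin. eapply le_trans; eauto. apply le_sub. }
  destruct (P_reg (fun y => exists i, proj1_sig (tau i) = y)) as [ax [pax Hax]].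
  - intros y [i <-]. exact (proj1 (proj2_sig (tau i))).
  - assert (Hx : forall y : {y | exists i, proj1_sig (tau i) = y}, exists i, proj1_sig (tau i) = proj1_sig y) by (intros [y hy]; exact hy).
    exists (fun y => choose (Hx y)). intros y y' E'. apply sig_eq.
    rewrite <- (choose_spec (Hx y)), <- (choose_spec (Hx y')), E'; auto.
  - exists ax. split; auto. intros al pal hal. apply NNPP; intro Hn.
    assert (Hlt : forall i, ltM (proj1_sig (tau i)) al).
    { intro i. eapply (lt_leq_tr WM); [|exact hal]. apply Hax; eauto. }
    assert (Hle : forall i, leq_of ltK (E al (proj1_sig (tau i))) j).
    { intro i. destruct (proj2_sig (tau i)) as [_ hj]. rewrite <- hj.
      apply (not_lt_leq WK). intro h'. apply Hn. eauto. }
    apply (leqK_small (fun v => leq_of ltK v j) j (le_refl _)).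
    exists (fun i => exist (fun v => leq_of ltK v j) _ (Hle i)).
    intros i i' E'. injection E'; intro E''. apply HE in E''; auto.
    apply Htau. apply sig_eq; auto.
Qed.
End Claims.

Lemma maxM (a b : M) : exists d, leq_of ltM a d /\ leq_of ltM b d.
Proof.
  destruct (lt_tot WM a b) as [h|[h|h]].
  - exists b; split; red; auto.
  - subst; exists b; split; red; auto.
  - exists a; split; red; auto.
Qed.

Lemma claim2 (A : M -> M) : (forall x, Pm (A x)) ->
  exists als, Pm als /\ le_card M {x | leq_of ltM (A x) als}.
Proof.
  intros HA. apply NNPP; intro Hn.
  assert (Hs : forall al, Pm al -> exists c, le_card {x | leq_of ltM (A x) al} {y | ltM y c}).
  { intros al pal. destruct (compare WM {x | leq_of ltM (A x) al}) as [H|[c Hc]]; eauto.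
    exfalso; apply Hn; eauto. }
  assert (Hcc : forall al, exists c, Pm al -> le_card {x | leq_of ltM (A x) al} {y | ltM y c} /\
      forall c', le_card {x | leq_of ltM (A x) al} {y | ltM y c'} -> leq_of ltM c c').
  { intro al. destruct (classic (Pm al)) as [pal|npal].
    - destruct (wo_min WM (fun c => le_card {x | leq_of ltM (A x) al} {y | ltM y c}) (Hs al pal)) as [c [h1 h2]].
      exists c; auto.
    - exists al; intro; contradiction. }
  destruct (choice_fun Hcc) as [cc Hcc'].
  assert (mono : forall al al', Pm al -> Pm al' -> leq_of ltM al al' -> leq_of ltM (cc al) (cc al')).
  { intros al al' pal pal' hle. apply (proj2 (Hcc' al pal)). eapply le_trans; [|exact (proj1 (Hcc' al' pal'))].
    apply le_subset. intros x hx. eapply (leq_tr WM); eauto. }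
  assert (Hbd : exists cs, forall al, Pm al -> leq_of ltM (cc al) cs).
  { apply NNPP; intro Hn2.
    assert (Hex : forall c, exists al, Pm al /\ ltM c (cc al)).
    { intro c. apply NNPP; intro H. apply Hn2. exists c. intros al pal. apply (not_lt_leq WM). intro h. apply H; eauto. }
    destruct cof_seq as [psi Hpsi].
    destruct (choice_fun (fun k => Hex (psi k))) as [ak Hak].
    destruct (P_reg (fun y => exists k, ak k = y)) as [al' [pal' Hal']].
    - intros y [k <-]. apply Hak.
    - assert (Hx : forall y : {y | exists k, ak k = y}, exists k, ak k = proj1_sig y) by (intros [y hy]; exact hy).
      exists (fun y => choose (Hx y)). intros y y' E'. apply sig_eq.
      rewrite <- (choose_spec (Hx y)), <- (choose_spec (Hx y')), E'; auto.
    - destruct sucM as [s hs]. destruct (Hpsi (s (cc al'))) as [k hk].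
      destruct (Hak k) as [pak hak].
      assert (h1 : leq_of ltM (cc (ak k)) (cc al')) by (apply mono; auto; left; apply Hal'; eauto).
      apply (lt_irr WM (cc al')).
      eapply (lt_leq_tr WM); [apply hs|]. eapply (leq_tr WM); [exact hk|]. left. eapply (lt_leq_tr WM); eauto. }
  destruct Hbd as [cs Hcs].
  assert (HJ : forall al, exists J : M -> M, Pm al -> (forall x, leq_of ltM (A x) al -> ltM (J x) cs) /\
     forall x x', leq_of ltM (A x) al -> leq_of ltM (A x') al -> J x = J x' -> x = x').
  { intro al. destruct (classic (Pm al)) as [pal|npal].
    - destruct (proj1 (Hcc' al pal)) as [hf Hhf].
      exists (fun x => match excluded_middle_informative (leq_of ltM (A x) al) with
               | left h => proj1_sig (hf (exist _ x h)) | right _ => x end).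
      intros _. split.
      + intros x hx. destruct excluded_middle_informative; [|contradiction].
        eapply (lt_leq_tr WM). apply (proj2_sig (hf _)). apply Hcs; auto.
      + intros x x' hx hx'. destruct excluded_middle_informative; [|contradiction].
        destruct excluded_middle_informative; [|contradiction].
        intro E'. apply sig_eq in E'. apply Hhf in E'. exact (f_equal (@proj1_sig _ _) E').
    - exists (fun x => x); intro; contradiction. }
  destruct (choice_fun HJ) as [J HJ'].
  destruct P_bound as [z Hz].
  destruct (compare WM K) as [HMK|[e He]]. { apply notMK; auto. }
  destruct (maxM z cs) as [d1 [hd1 hd2]]. destruct (maxM d1 e) as [d [hd3 hd4]].
  assert (Hinf : infinite {y | ltM y d}).
  { eapply le_trans. exact IK. eapply le_trans. exact He. apply le_subset. intros; eapply (lt_leq_tr WM); eauto. }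
  apply (seg_small CM d). eapply le_trans; [|exact (hess_all CM d Hinf)].
  assert (R1 : forall x, leq_of ltM (A x) (A x)) by (intro; right; auto).
  assert (F1 : forall x, ltM (A x) d).
  { intro x. eapply (lt_leq_tr WM). apply Hz; auto. eapply (leq_tr WM); eauto. }
  assert (F2 : forall x, ltM (J (A x) x) d).
  { intro x. eapply (lt_leq_tr WM). apply (proj1 (HJ' (A x) (HA x))); auto. eapply (leq_tr WM); eauto. }
  exists (fun x => (exist (fun y => ltM y d) (A x) (F1 x), exist (fun y => ltM y d) (J (A x) x) (F2 x))).
  intros x y E'. injection E'; intros E2 E1. rewrite E1 in E2.
  apply (proj2 (HJ' (A y) (HA y))); auto. rewrite <- E1; auto.
Qed.

Lemma B_upper L : is_succ_card K L -> exists FL : L -> (M -> K),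
  (forall l l', FL l = FL l' -> l = l') /\ forall g, exists l, le_card M {a | ltK (g a) (FL l a)}.
Proof.
  intros [HKL HL].
  destruct MMle as [p Hp].
  destruct (@option_le K IK) as [s Hs].
  assert (He : forall al, exists e : M -> K, Pm al -> forall be be', ltM be al -> ltM be' al -> e be = e be' -> be = be').
  { intro al. destruct (classic (Pm al)) as [pal|npal].
    - destruct (le_sub_fun k0ex pal) as [e He]. exists e; intros _; auto.
    - exists (fun _ => k0ex); intro; contradiction. }
  destruct (choice_fun He) as [e He'].
  set (E := fun al be => s (Some (e al be))).
  set (km := s None).
  assert (HE : forall al, Pm al -> forall be be', ltM be al -> ltM be' al -> E al be = E al be' -> be = be').
  { intros al pal be be' h h' E'. apply Hs in E'. injection E'; intro. eapply He'; eauto. }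
  assert (HEkm : forall al be, E al be <> km).
  { intros al be E'. apply Hs in E'. discriminate. }
  assert (HPL : lt_card K {x | Pm x}).
  { split; [|exact P_notle]. destruct (compare WK {x|Pm x}) as [H|[k Hk]]; auto.
    exfalso; apply P_notle. eapply le_trans; eauto. apply le_sub. }
  destruct (HL _ HPL) as [j Hj].
  assert (Hunb : forall a0, Pm a0 -> exists l, leq_of ltM a0 (proj1_sig (j l))).
  { intros a0 pa0. apply NNPP; intro Hn. apply (proj2 HKL).
    eapply le_trans; [|exact pa0].
    assert (Hl : forall l, ltM (proj1_sig (j l)) a0).
    { intro l. apply NNPP; intro h. apply Hn. exists l. apply (not_lt_leq WM); auto. }
    exists (fun l => exist _ (proj1_sig (j l)) (Hl l)). intros l l' E'. apply Hj. apply sig_eq.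
    exact (f_equal (@proj1_sig _ _) E'). }
  exists (fun l => fam p E km (proj1_sig (j l))).
  split.
  - intros l l' E'. apply Hj. apply sig_eq.
    set (a := proj1_sig (j l)) in *. set (a' := proj1_sig (j l')) in *.
    destruct (lt_tot WM a a') as [h|[h|h]]; auto; exfalso.
    + assert (H1 := f_equal (fun f => f (p (m0ex, a))) E'). simpl in H1.
      rewrite (fam_km _ _ _ _ _ _ Hp (lt_irr WM a)) in H1.
      rewrite (fam_at _ _ _ _ _ _ Hp h) in H1. exact (HEkm _ _ (eq_sym H1)).
    + assert (H1 := f_equal (fun f => f (p (m0ex, a'))) E'). simpl in H1.
      rewrite (fam_km _ _ _ _ _ _ Hp (lt_irr WM a')) in H1.
      rewrite (fam_at _ _ _ _ _ _ Hp h) in H1. exact (HEkm _ _ H1).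
  - intro g.
    assert (HA : forall x, exists ax, Pm ax /\ forall al, Pm al -> leq_of ltM ax al ->
                 exists be, ltM be al /\ ltK (g (p (x,be))) (E al be)).
    { intro x. apply (claim1 E HE (fun be => g (p (x,be)))). }
    destruct (choice_fun HA) as [A HA'].
    destruct (claim2 A (fun x => proj1 (HA' x))) as [als [pals Hals]].
    destruct (Hunb als pals) as [l hl].
    exists l. set (al := proj1_sig (j l)) in *.
    assert (pal : Pm al) by exact (proj2_sig (j l)).
    assert (Hbe : forall x, exists be, leq_of ltM (A x) als -> ltM be al /\ ltK (g (p (x,be))) (E al be)).
    { intro x. destruct (classic (leq_of ltM (A x) als)) as [h|h].
      - destruct (proj2 (HA' x) al pal (leq_tr WM h hl)) as [be hbe]. exists be; auto.
      - exists x; intro; contradiction. }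
    destruct (choice_fun Hbe) as [bx Hbx].
    eapply le_trans; [exact Hals|].
    assert (Hex : forall y : {x | leq_of ltM (A x) als}, ltK (g (p (proj1_sig y, bx (proj1_sig y))))
               (fam p E km al (p (proj1_sig y, bx (proj1_sig y))))).
    { intros [x hx]; simpl. destruct (Hbx x hx) as [h1 h2]. rewrite (fam_at _ _ _ _ _ _ Hp h1). auto. }
    exists (fun y => exist (fun a => ltK (g a) (fam p E km al a)) _ (Hex y)).
    intros y y' E'. injection E'; intro E''. apply Hp in E''. injection E''; intros. apply sig_eq; auto.
Qed.

Lemma B_all L : is_succ_card K L ->
  b_is M K (@le_nu M K ltK M) L /\ b_is M K (le_bd ltM ltK) L.
Proof.
  intros HL. destruct (B_upper _ HL) as [FL [HFi HFu]].
  set (B := fun f => exists l, f = FL l).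
  assert (EB : eq_card {f | B f} L).
  { exists (fun f : {f | B f} => choose (proj2_sig f)).
    exists (fun l => exist B (FL l) (ex_intro _ l eq_refl)).
    split.
    - intros [f hf]. apply sig_eq; simpl. symmetry. exact (choose_spec hf).
    - intros l. simpl. apply HFi. symmetry. exact (choose_spec (ex_intro (fun l0 => FL l = FL l0) l eq_refl)). }
  split; split.
  - exists B; split; auto. intros [g Hg]. destruct (HFu g) as [l Hl].
    exact (proj2 (Hg (FL l) (ex_intro _ l eq_refl)) Hl).
  - intros B' HB'. apply B_lower_nu. eapply succ_small; eauto.
  - exists B; split; auto. intros [g Hg]. destruct (HFu g) as [l Hl].
    destruct (Hg (FL l) (ex_intro _ l eq_refl)) as [b Hb].
    apply (proj2 (leqM_small b)). eapply le_trans; [exact Hl|]. apply le_subset; auto.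
  - intros B' HB'. apply B_lower_bd. eapply succ_small; eauto.
Qed.

End Main.

Theorem mainTheorem17 :
  forall (M K : Type) (ltM : M -> M -> Prop) (ltK : K -> K -> Prop),
    is_cardinal ltK -> infinite K -> regular ltK ->
    is_cardinal ltM -> cf_is ltM K -> lt_card K M ->
    b_is M K (le_nu ltK K) K /\ b_is M K (le_all ltK) K /\
    (forall L : Type, is_succ_card K L ->
       b_is M K (le_nu ltK M) L /\ b_is M K (le_bd ltM ltK) L).
Proof.
  intros M K ltM ltK CK IK RK CM CF KM.
  split; [|split].
  - eapply A_nu; eauto.
  - eapply A_all; eauto.
  - intros L HL. eapply B_all; eauto.
Qed.
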